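(* Let $\mathcal{C}=\mathcal{C}_{\mathcal{Q}}$ be a harmonic curve in $\mathbb{P}^2$. Then there is a polarity $P\mapsto p$ of $\mathbb{P}^2$ such that: (i) for every point $P$, $P\in\mathcal{C}$ if and only if $P\in p$; (ii) for every point $P\notin\mathcal{C}$ (so that $P\notin p$), the harmonic reflection $\rho_{P,p}$ maps $\mathcal{C}$ onto itself. Moreover, for each point $Z\in\mathcal{C}$ its polar line $z$ is the line of the tangent bundle $\mathcal{C}_{\mathcal{Q}}^*$ through $Z$.
   Context: $\mathbb{P}^2$ denotes the projective plane over a field $F$ with $\operatorname{char}F\neq 2$. For distinct points $X,Y$, $X\vee Y$ is the line through them; for distinct lines $\ell,m$, $\ell\wedge m$ is their common point. Maps act on the right. Four distinct collinear points $A,C,B,D$ form a harmonic set with conjugate pairs $\{A,B\}$ and $\{C,D\}$ if the cross-ratio $(A,B;C,D)=-1$. Four distinct concurrent lines form a harmonic pencil with given conjugate pairs if some (equivalently every) line not through their common point meets them in a harmonic set with the corresponding conjugate pairs. For a point $P$ and a line $m$ with $P\notin m$, the harmonic reflection $\rho_{P,m}$ of $\mathbb{P}^2$ fixes $P$ and every point of $m$ and sends every other point $X$ to the harmonic conjugate of $X$ with respect to $P$ and $(X\vee P)\wedge m$. A quadrangle $\mathcal{Q}$ with vertices $A,C,B,D$ (in cyclic order) consists of four points in general position (no three collinear) together with this cyclic order up to reversal; its sides are $A\vee C, C\vee B, B\vee D, D\vee A$, and its diagonal lines are $A\vee B$ and $C\vee D$. The harmonic curve $\mathcal{C}_{\mathcal{Q}}$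 is the set consisting of $A,C,B,D$ together with all points $Z\notin\{A,B,C,D\}$ such that $Z\vee A, Z\vee C, Z\vee B, Z\vee D$ are four distinct lines forming a harmonic pencil with conjugate pairs $\{Z\vee A,Z\vee B\}$ and $\{Z\vee C,Z\vee D\}$. The tangent line at a vertex $V$ is the harmonic conjugate, within the pencil at $V$, of the diagonal line through $V$ with respect to the two sides through $V$; let $a,c,b,d$ be the tangent lines at $A,C,B,D$. For four lines $l_1,\dots,l_4$ (no three concurrent) in cyclic order, their harmonic bundle consists of $l_1,\dots,l_4$ together with every other line $z$ such that $z\wedge l_1,\dots,z\wedge l_4$ are four distinct points forming a harmonic set with conjugate pairs $\{z\wedge l_1,z\wedge l_3\}$, $\{z\wedge l_2,z\wedge l_4\}$; the tangent bundle $\mathcal{C}_{\mathcal{Q}}^*$ is the harmonic bundle of $a,c,b,d$. A polarity of $\mathbb{P}^2$ is a bijection $P\mapsto p$ from points to lines such that $P\in q\iff Q\in p$ for all points $P,Q$ (lower case denotes the image of the same upper case letter); $p$ is the polar of $P$, and $P$ the pole of $p$. *)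

(* Defs.v *)
From HB Require Import structures.
From mathcomp Require Import all_boot all_order all_algebra.
Set Implicit Arguments. Unset Strict Implicit. Unset Printing Implicit Defensive.
Import Order.TTheory GRing.Theory Num.Theory.
Local Open Scope ring_scope.

(* Projective plane P^2(F): points (and lines) are represented by the unique
   normalized homogeneous coordinate vector in F^3 \ {0} whose first nonzero
   coordinate equals 1.  Lines are given by dual coordinate vectors; a point
   P lies on a line l iff  sum_j P_j l_j = 0. *)

Section Proj.
Variable F : fieldType.

Definition c0 (v : 'rV[F]_3) := v ord0 (inord 0).
Definition c1 (v : 'rV[F]_3) := v ord0 (inord 1).
Definition c2 (v : 'rV[F]_3) := v ord0 (inord 2).

Definition normed (v : 'rV[F]_3) : bool :=
  if c0 v != 0 then c0 v == 1 else if c1 v != 0 then c1 v == 1 else c2 v == 1.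

Definition point := {v : 'rV[F]_3 | normed v}.
Definition line := {v : 'rV[F]_3 | normed v}.

Definition incid (P : point) (l : line) : Prop :=
  \sum_(j < 3) (val P) ord0 j * (val l) ord0 j = 0.

Definition pivot (v : 'rV[F]_3) :=
  if c0 v != 0 then c0 v else if c1 v != 0 then c1 v else c2 v.
Definition nrm (v : 'rV[F]_3) : 'rV[F]_3 := (pivot v)^-1 *: v.

Definition e0 : 'rV[F]_3 := \row_(j < 3) (if j == inord 0 then 1 else 0).
Lemma normed_e0 : normed e0.
Proof. by rewrite /normed /c0 mxE eqxx oner_eq0 /= eqxx. Qed.
Definition pt0 : point := exist _ e0 normed_e0.

Definition mkpt (v : 'rV[F]_3) : point := insubd pt0 (nrm v).

Definition cross (u v : 'rV[F]_3) : 'rV[F]_3 :=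
  \row_(j < 3) (if j == inord 0 then c1 u * c2 v - c2 u * c1 v
                else if j == inord 1 then c2 u * c0 v - c0 u * c2 v
                else c0 u * c1 v - c1 u * c0 v).

Definition join (X Y : point) : line := mkpt (cross (val X) (val Y)).
Definition meet (l m : line) : point := mkpt (cross (val l) (val m)).

Definition cross_ratio_is (A B C D : point) (r : F) : Prop :=
  exists l1 m1 l2 m2 : F,
    val C = l1 *: val A + m1 *: val B /\
    val D = l2 *: val A + m2 *: val B /\
    l1 * m2 != 0 /\ r = (m1 * l2) / (l1 * m2).

Definition collinear3 (X Y Z : point) : Prop :=
  exists l : line, [/\ incid X l, incid Y l & incid Z l].

(* A, C, B, D form a harmonic set with conjugate pairs {A,B}, {C,D} *)
Definition harmonic_set (A B C D : point) : Prop :=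
  [/\ uniq [:: val A; val B; val C; val D],
      (exists l : line, [/\ incid A l, incid B l, incid C l & incid D l])
    & cross_ratio_is A B C D (-1)].

Definition harmonic_pencil (l1 l2 l3 l4 : line) : Prop :=
  [/\ uniq [:: val l1; val l2; val l3; val l4],
      (exists O : point, [/\ incid O l1, incid O l2, incid O l3 & incid O l4])
    & exists m : line,
        (forall O : point, incid O l1 -> incid O l2 -> ~ incid O m) /\
        harmonic_set (meet m l1) (meet m l2) (meet m l3) (meet m l4)].

(* harmonic reflection rho_{P,m} as a (functional) relation: X |-> Y *)
Definition harm_refl (P : point) (m : line) (X Y : point) : Prop :=
  (X = P /\ Y = P) \/ (incid X m /\ Y = X) \/
  [/\ X <> P, ~ incid X m & harmonic_set P (meet (join X P) m) X Y].

(* the harmonic curve C_Q of the quadrangle with vertices A,C,B,D (cyclic order) *)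
Definition harmonic_curve (A C B D : point) (Z : point) : Prop :=
  Z = A \/ Z = C \/ Z = B \/ Z = D \/
  [/\ Z <> A, Z <> C, Z <> B, Z <> D &
      harmonic_pencil (join Z A) (join Z B) (join Z C) (join Z D)].

Definition quadrangle (A C B D : point) : Prop :=
  [/\ ~ collinear3 A C B, ~ collinear3 A C D, ~ collinear3 A B D
    & ~ collinear3 C B D].

Definition tangent_line (s1 s2 dg t : line) : Prop := harmonic_pencil s1 s2 dg t.

(* harmonic bundle of the lines l1,l2,l3,l4 (cyclic order) *)
Definition harmonic_bundle (l1 l2 l3 l4 : line) (z : line) : Prop :=
  z = l1 \/ z = l2 \/ z = l3 \/ z = l4 \/
  [/\ z <> l1, z <> l2, z <> l3, z <> l4 &
      harmonic_set (meet z l1) (meet z l3) (meet z l2) (meet z l4)].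

Definition polarity (pol : point -> line) : Prop :=
  bijective pol /\ forall P Q : point, incid P (pol Q) <-> incid Q (pol P).

Definition refl_maps_onto (P : point) (m : line) (S : point -> Prop) : Prop :=
  (forall X Y, harm_refl P m X Y -> S X -> S Y) /\
  (forall Y, S Y -> exists X, S X /\ harm_refl P m X Y).

End Proj.

(* Main.v *)
Require Import Defs.
From HB Require Import structures.
From mathcomp Require Import all_boot all_order all_algebra.
From mathcomp Require Import ring.
Set Implicit Arguments. Unset Strict Implicit. Unset Printing Implicit Defensive.
Import Order.TTheory GRing.Theory Num.Theory.
Local Open Scope ring_scope.


Section Base.
Variable F : fieldType.
Implicit Types u v w : 'rV[F]_3.

Lemma ord3E (i : 'I_3) : i = inord 0 \/ i = inord 1 \/ i = inord 2.
Proof.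
case: i => [[|[|[|k]]] Hi] //.
- by left; apply/val_inj; rewrite /= inordK.
- by right; left; apply/val_inj; rewrite /= inordK.
- by right; right; apply/val_inj; rewrite /= inordK.
Qed.

Lemma vecP3 u v : c0 u = c0 v -> c1 u = c1 v -> c2 u = c2 v -> u = v.
Proof.
move=> h0 h1 h2; apply/rowP => i.
by case: (ord3E i) => [->|[->|->]].
Qed.

Lemma i01 : (inord 0 : 'I_3) != inord 1. Proof. by apply/eqP => /(f_equal val); rewrite /= !inordK. Qed.
Lemma i02 : (inord 0 : 'I_3) != inord 2. Proof. by apply/eqP => /(f_equal val); rewrite /= !inordK. Qed.
Lemma i12 : (inord 1 : 'I_3) != inord 2. Proof. by apply/eqP => /(f_equal val); rewrite /= !inordK. Qed.

Definition dot u v := c0 u * c0 v + c1 u * c1 v + c2 u * c2 v.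

Lemma sum3E (f : 'I_3 -> F) : \sum_(j < 3) f j = f (inord 0) + f (inord 1) + f (inord 2).
Proof.
rewrite !big_ord_recr big_ord0 /= add0r.
have e0 : (widen_ord (leqnSn 2) (widen_ord (leqnSn 1) ord_max)) = inord 0 :> 'I_3.
  by apply/val_inj; rewrite /= inordK.
have e1 : (widen_ord (leqnSn 2) ord_max) = inord 1 :> 'I_3.
  by apply/val_inj; rewrite /= inordK.
have e2 : (ord_max) = inord 2 :> 'I_3.
  by apply/val_inj; rewrite /= inordK.
by rewrite e0 e1 e2.
Qed.

Lemma incidE (P : point F) (l : line F) : incid P l <-> dot (val P) (val l) = 0.
Proof. by rewrite /incid sum3E. Qed.

Lemma c0D u v : c0 (u + v) = c0 u + c0 v. Proof. by rewrite /c0 mxE. Qed.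
Lemma c1D u v : c1 (u + v) = c1 u + c1 v. Proof. by rewrite /c1 mxE. Qed.
Lemma c2D u v : c2 (u + v) = c2 u + c2 v. Proof. by rewrite /c2 mxE. Qed.
Lemma c0B u v : c0 (u - v) = c0 u - c0 v. Proof. by rewrite /c0 !mxE. Qed.
Lemma c1B u v : c1 (u - v) = c1 u - c1 v. Proof. by rewrite /c1 !mxE. Qed.
Lemma c2B u v : c2 (u - v) = c2 u - c2 v. Proof. by rewrite /c2 !mxE. Qed.
Lemma c0N u : c0 (- u) = - c0 u. Proof. by rewrite /c0 !mxE. Qed.
Lemma c1N u : c1 (- u) = - c1 u. Proof. by rewrite /c1 !mxE. Qed.
Lemma c2N u : c2 (- u) = - c2 u. Proof. by rewrite /c2 !mxE. Qed.
Lemma c0Z k u : c0 (k *: u) = k * c0 u. Proof. by rewrite /c0 mxE. Qed.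
Lemma c1Z k u : c1 (k *: u) = k * c1 u. Proof. by rewrite /c1 mxE. Qed.
Lemma c2Z k u : c2 (k *: u) = k * c2 u. Proof. by rewrite /c2 mxE. Qed.
Lemma c00 : c0 (0 : 'rV[F]_3) = 0. Proof. by rewrite /c0 mxE. Qed.
Lemma c10 : c1 (0 : 'rV[F]_3) = 0. Proof. by rewrite /c1 mxE. Qed.
Lemma c20 : c2 (0 : 'rV[F]_3) = 0. Proof. by rewrite /c2 mxE. Qed.
Lemma c0X u v : c0 (cross u v) = c1 u * c2 v - c2 u * c1 v.
Proof. by rewrite /c0 /cross mxE eqxx. Qed.
Lemma c1X u v : c1 (cross u v) = c2 u * c0 v - c0 u * c2 v.
Proof. by rewrite /c1 /cross mxE eq_sym (negPf i01) eqxx. Qed.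
Lemma c2X u v : c2 (cross u v) = c0 u * c1 v - c1 u * c0 v.
Proof. by rewrite /c2 /cross mxE eq_sym (negPf i02) eq_sym (negPf i12). Qed.

End Base.

Definition cE := (c0D, c1D, c2D, c0B, c1B, c2B, c0N, c1N, c2N, c0Z, c1Z, c2Z, c00, c10, c20, c0X, c1X, c2X).

Ltac vec := apply: vecP3; rewrite ?cE; ring.

Section T.
Variable F : fieldType.
Lemma test (u v w : 'rV[F]_3) : cross (cross u v) w = dot u w *: v - dot v w *: u.
Proof. rewrite /dot; vec. Qed.
End T.


Ltac byh h k := match type of h with ?E = 0 => match goal with |- ?L = 0 =>
  rewrite (_ : L = k * E); [by rewrite h mulr0 | ring] end end.

Section Norm.
Variable F : fieldType.
Implicit Types u v w : 'rV[F]_3.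

Lemma vec0P u : u = 0 <-> [/\ c0 u = 0, c1 u = 0 & c2 u = 0].
Proof.
split; first by move=> ->; rewrite !cE.
by case=> h0 h1 h2; apply: vecP3; rewrite ?cE.
Qed.

Lemma vec_nz u : u != 0 -> [\/ c0 u != 0, c1 u != 0 | c2 u != 0].
Proof.
move=> hu; case: (eqVneq (c0 u) 0) => h0; last by apply: Or31.
case: (eqVneq (c1 u) 0) => h1; last by apply: Or32.
case: (eqVneq (c2 u) 0) => h2; last by apply: Or33.
by move: hu; rewrite (proj2 (vec0P u)) ?eqxx.
Qed.

Lemma normed_nz v : normed v -> v != 0.
Proof.
move=> hv; apply/eqP => e; move: hv; rewrite e /normed !cE eqxx /=.
by rewrite eq_sym oner_eq0.
Qed.

Lemma pivot_nz v : v != 0 -> pivot v != 0.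
Proof.
rewrite /pivot => hv.
case: (eqVneq (c0 v) 0) => h0 /=; last by [].
case: (eqVneq (c1 v) 0) => h1 /=; last by [].
case: (eqVneq (c2 v) 0) => h2 /=; last by [].
by move: hv; rewrite (proj2 (vec0P v)) ?eqxx.
Qed.

Lemma normed_nrm v : v != 0 -> normed (nrm v).
Proof.
move=> hv; rewrite /normed /nrm /pivot !cE.
case: (eqVneq (c0 v) 0) => h0 /=.
  rewrite h0 mulr0 eqxx /=.
  case: (eqVneq (c1 v) 0) => h1 /=.
    rewrite h1 mulr0 eqxx /=.
    case: (eqVneq (c2 v) 0) => h2; last by rewrite mulVf.
    by move: hv; rewrite (proj2 (vec0P v)) ?eqxx.
  by rewrite mulVf // oner_eq0 /=.
by rewrite mulVf // oner_eq0 /=.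
Qed.

Lemma val_mkpt v : v != 0 -> val (mkpt v) = (pivot v)^-1 *: v.
Proof. by move=> hv; rewrite /mkpt insubdK //; apply: normed_nrm. Qed.

Lemma normed_eq u v k : normed u -> normed v -> u = k *: v -> u = v.
Proof.
move=> hu hv e; have hu0 := normed_nz hu.
move: hu hv; rewrite e /normed !cE.
case: (eqVneq (c0 v) 0) => h0 /=.
  rewrite h0 mulr0 !eqxx /=.
  case: (eqVneq (c1 v) 0) => h1 /=.
    rewrite h1 mulr0 !eqxx /= => /eqP h2 /eqP h2'.
    have -> : k = 1 by rewrite h2' mulr1 in h2.
    by rewrite scale1r.
  move=> + /eqP h1'; rewrite h1' mulr1.
  case: (eqVneq k 0) => hk; last by move=> /eqP ->; rewrite scale1r.
  by move: hu0; rewrite e hk scale0r eqxx.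
move=> + /eqP h0'; rewrite h0' mulr1.
case: (eqVneq k 0) => hk; last by move=> /eqP ->; rewrite scale1r.
by move: hu0; rewrite e hk scale0r eqxx.
Qed.

Lemma mkpt_valZ v : v != 0 -> exists2 k, k != 0 & val (mkpt v) = k *: v.
Proof.
by move=> hv; exists (pivot v)^-1; [rewrite invr_eq0 pivot_nz | rewrite val_mkpt].
Qed.

Lemma mkptZ v k : v != 0 -> k != 0 -> mkpt (k *: v) = mkpt v.
Proof.
move=> hv hk; have hkv : k *: v != 0 by rewrite scaler_eq0 negb_or hk.
apply/val_inj; case: (mkpt_valZ hkv) => k1 hk1 e1; case: (mkpt_valZ hv) => k2 hk2 e2.
apply: (@normed_eq _ _ (k1 * k / k2)); [exact: valP | exact: valP |].
by rewrite e1 e2 !scalerA divfK.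
Qed.

Lemma mkpt_val (P : point F) : mkpt (val P) = P.
Proof.
apply/val_inj; have hP := normed_nz (valP P).
case: (mkpt_valZ hP) => k hk e.
by apply: (@normed_eq _ _ k) => //; exact: valP.
Qed.

Lemma val_nz (P : point F) : val P != 0.
Proof. exact: normed_nz (valP P). Qed.

Lemma mkpt_inj u v : u != 0 -> v != 0 -> mkpt u = mkpt v -> exists2 k, k != 0 & v = k *: u.
Proof.
move=> hu hv e; case: (mkpt_valZ hu) => k1 hk1 e1; case: (mkpt_valZ hv) => k2 hk2 e2.
exists (k1 / k2); first by rewrite mulf_neq0 ?invr_eq0.
apply: (scalerI hk2); rewrite -e2 -e e1 scalerA; congr (_ *: _).
by rewrite mulrCA mulfV // mulr1.
Qed.

Definition indep u v := forall s t : F, s *: u + t *: v = 0 -> s = 0 /\ t = 0.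

Lemma cross0 u : cross u u = 0. Proof. vec. Qed.
Lemma crossC u v : cross u v = - cross v u. Proof. vec. Qed.
Lemma crossDl u v w : cross (u + v) w = cross u w + cross v w. Proof. vec. Qed.
Lemma crossDr u v w : cross w (u + v) = cross w u + cross w v. Proof. vec. Qed.
Lemma crossZl k u v : cross (k *: u) v = k *: cross u v. Proof. vec. Qed.
Lemma crossZr k u v : cross u (k *: v) = k *: cross u v. Proof. vec. Qed.
Lemma crossNl u v : cross (- u) v = - cross u v. Proof. vec. Qed.
Lemma crossNr u v : cross u (- v) = - cross u v. Proof. vec. Qed.
Lemma cross0l u : cross 0 u = 0. Proof. vec. Qed.
Lemma cross0r u : cross u 0 = 0. Proof. vec. Qed.
Lemma crossBl u v w : cross (u - v) w = cross u w - cross v w. Proof. vec. Qed.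
Lemma crossBr u v w : cross w (u - v) = cross w u - cross w v. Proof. vec. Qed.

Lemma cross_indep u v : cross u v != 0 -> indep u v.
Proof.
move=> h s t e.
have e1 : s *: cross u v = 0.
  by have := f_equal (fun x => cross x v) e; rewrite crossDl !crossZl cross0 scaler0 addr0 cross0l.
have e2 : t *: cross u v = 0.
  by have := f_equal (fun x => cross u x) e; rewrite crossDr !crossZr cross0 scaler0 add0r cross0r.
by move: e1 e2 => /eqP; rewrite scaler_eq0 (negPf h) orbF => /eqP -> /eqP; rewrite scaler_eq0 (negPf h) orbF => /eqP ->.
Qed.

Lemma indep_cross u v : indep u v -> cross u v != 0.
Proof.
move=> hi; apply/eqP => /vec0P; rewrite !cE => -[x0 x1 x2].
have hu : u != 0.
  by apply/eqP => e; have := hi 1 0; rewrite e scaler0 scale0r addr0 => /(_ erefl) [] /eqP; rewrite oner_eq0.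
case: (vec_nz hu) => h.
- have := hi (c0 v) (- c0 u); case.
    by apply: vecP3; rewrite !cE; [ring | byh x2 (-1 : F) | byh x1 (1 : F)].
  by move=> _ /eqP; rewrite oppr_eq0 (negPf h).
- have := hi (c1 v) (- c1 u); case.
    by apply: vecP3; rewrite !cE; [byh x2 (1 : F) | ring | byh x0 (-1 : F)].
  by move=> _ /eqP; rewrite oppr_eq0 (negPf h).
- have := hi (c2 v) (- c2 u); case.
    by apply: vecP3; rewrite !cE; [byh x1 (-1 : F) | byh x0 (1 : F) | ring].
  by move=> _ /eqP; rewrite oppr_eq0 (negPf h).
Qed.

Lemma indep_nz u v : indep u v -> u != 0 /\ v != 0.
Proof.
move=> /indep_cross h; split; apply/eqP => e; move: h; rewrite e ?cross0l ?cross0r eqxx //.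
Qed.

Lemma cross0_prop u v : u != 0 -> cross u v = 0 -> exists k, v = k *: u.
Proof.
move=> hu /vec0P; rewrite !cE => -[/subr0_eq x0 /subr0_eq x1 /subr0_eq x2].
case: (vec_nz hu) => h.
- exists (c0 v / c0 u); apply: vecP3; rewrite !cE.
  + by rewrite divfK.
  + by rewrite -(mulKf h (c1 v)) x2; field.
  + by rewrite -(mulKf h (c2 v)) -x1; field.
- exists (c1 v / c1 u); apply: vecP3; rewrite !cE.
  + by rewrite -(mulKf h (c0 v)) -x2; field.
  + by rewrite divfK.
  + by rewrite -(mulKf h (c2 v)) x0; field.
- exists (c2 v / c2 u); apply: vecP3; rewrite !cE.
  + by rewrite -(mulKf h (c0 v)) x1; field.
  + by rewrite -(mulKf h (c1 v)) -x0; field.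
  + by rewrite divfK.
Qed.

Lemma not_indep u v : u != 0 -> v != 0 -> ~ indep u v -> exists2 k, k != 0 & v = k *: u.
Proof.
move=> hu hv hn; case: (eqVneq (cross u v) 0) => hc; last by case: hn; apply: cross_indep.
case: (cross0_prop hu hc) => k e; exists k => //.
by apply/eqP => k0; move: hv; rewrite e k0 scale0r eqxx.
Qed.

Lemma prop_cross u v k : v = k *: u -> cross u v = 0.
Proof. by move=> ->; rewrite crossZr cross0 scaler0. Qed.

Lemma mkpt_prop u v k : v = k *: u -> u != 0 -> k != 0 -> mkpt v = mkpt u.
Proof. by move=> -> hu hk; rewrite mkptZ. Qed.

Lemma mkpt_neq_indep u v : u != 0 -> v != 0 -> mkpt u <> mkpt v -> indep u v.
Proof.
move=> hu hv hne; case: (eqVneq (cross u v) 0) => hc; last by apply: cross_indep.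
case: (cross0_prop hu hc) => k e; have hk : k != 0.
  by apply/eqP => k0; move: hv; rewrite e k0 scale0r eqxx.
by case: hne; rewrite (mkpt_prop e hu hk).
Qed.

Lemma val_inj_prop (P Q : point F) k : val P = k *: val Q -> P = Q.
Proof. by move=> e; apply/val_inj; apply: (normed_eq (valP P) (valP Q) e). Qed.

End Norm.


Section Inc.
Variable F : fieldType.
Implicit Types u v w l m p q n x : 'rV[F]_3.

Lemma dotC u v : dot u v = dot v u. Proof. rewrite /dot; ring. Qed.
Lemma dotDl u v w : dot (u + v) w = dot u w + dot v w. Proof. rewrite /dot !cE; ring. Qed.
Lemma dotDr u v w : dot w (u + v) = dot w u + dot w v. Proof. rewrite /dot !cE; ring. Qed.
Lemma dotZl k u v : dot (k *: u) v = k * dot u v. Proof. rewrite /dot !cE; ring. Qed.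
Lemma dotZr k u v : dot u (k *: v) = k * dot u v. Proof. rewrite /dot !cE; ring. Qed.
Lemma dotXl u v : dot u (cross u v) = 0. Proof. rewrite /dot !cE; ring. Qed.
Lemma dotXr u v : dot v (cross u v) = 0. Proof. rewrite /dot !cE; ring. Qed.
Lemma dot0l u : dot 0 u = 0. Proof. rewrite /dot !cE; ring. Qed.
Lemma dot0r u : dot u 0 = 0. Proof. rewrite /dot !cE; ring. Qed.
Lemma dotNl u v : dot (- u) v = - dot u v. Proof. rewrite /dot !cE; ring. Qed.
Lemma dotNr u v : dot u (- v) = - dot u v. Proof. rewrite /dot !cE; ring. Qed.
Lemma dotBl u v w : dot (u - v) w = dot u w - dot v w. Proof. rewrite /dot !cE; ring. Qed.
Lemma dotBr u v w : dot w (u - v) = dot w u - dot w v. Proof. rewrite /dot !cE; ring. Qed.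

Lemma crossXX u v w : cross (cross u v) w = dot u w *: v - dot v w *: u.
Proof. rewrite /dot; vec. Qed.

Lemma crossXXm m p q : cross (cross m p) (cross m q) = dot m (cross p q) *: m.
Proof. rewrite /dot; vec. Qed.

Lemma perp2 l m x : cross l m != 0 -> dot x l = 0 -> dot x m = 0 ->
  exists k, x = k *: cross l m.
Proof.
move=> h hl hm; have := crossXX l m x; rewrite dotC hl dotC hm !scale0r subr0.
move/(cross0_prop h) => [k ->]; by exists k.
Qed.

Definition ev (i : 'I_3) : 'rV[F]_3 := \row_(j < 3) (if j == i then 1 else 0).

Lemma i10 : (inord 1 : 'I_3) != inord 0. Proof. by rewrite eq_sym i01. Qed.
Lemma i20 : (inord 2 : 'I_3) != inord 0. Proof. by rewrite eq_sym i02. Qed.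
Lemma i21 : (inord 2 : 'I_3) != inord 1. Proof. by rewrite eq_sym i12. Qed.
Definition ineqs := (negPf i01, negPf i02, negPf i12, negPf i10, negPf i20, negPf i21).

Lemma exists_dot n : n != 0 -> exists q, dot n q != 0.
Proof.
move=> hn; case: (vec_nz hn) => h.
- exists (ev (inord 0)); rewrite /dot /ev /c0 /c1 /c2 !mxE eqxx !ineqs.
  by rewrite !mulr0 !addr0 mulr1.
- exists (ev (inord 1)); rewrite /dot /ev /c0 /c1 /c2 !mxE eqxx !ineqs.
  by rewrite !mulr0 addr0 add0r mulr1.
- exists (ev (inord 2)); rewrite /dot /ev /c0 /c1 /c2 !mxE eqxx !ineqs.
  by rewrite !mulr0 !add0r mulr1.
Qed.

Lemma span2 p1 p2 l : cross p1 p2 != 0 -> dot l (cross p1 p2) = 0 ->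
  exists s t, l = s *: p1 + t *: p2.
Proof.
move=> hn hl; case: (exists_dot hn) => q hq.
have id : dot q (cross p1 p2) *: l = dot q (cross l p2) *: p1 + dot q (cross p1 l) *: p2
   + dot l (cross p1 p2) *: q.
  rewrite /dot; vec.
rewrite hl scale0r addr0 in id.
have hq' : dot q (cross p1 p2) != 0 by rewrite dotC.
exists (dot q (cross l p2) / dot q (cross p1 p2)), (dot q (cross p1 l) / dot q (cross p1 p2)).
apply: (scalerI hq'); rewrite id scalerDr !scalerA !(mulrC (dot q (cross p1 p2))).
by rewrite !divfK.
Qed.

Lemma neq_val (P Q : point F) : P <> Q -> val P != val Q.
Proof. by move=> h; apply/eqP => e; apply: h; apply: val_inj. Qed.

Lemma neq_cross (P Q : point F) : P <> Q -> cross (val P) (val Q) != 0.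
Proof.
move=> h; apply/eqP => e; case: (cross0_prop (val_nz P) e) => k ek.
by apply: h; apply/esym/(val_inj_prop ek).
Qed.

Lemma incid_mkpt (P : point F) v : v != 0 -> incid P (mkpt v) <-> dot (val P) v = 0.
Proof.
move=> hv; rewrite incidE; case: (mkpt_valZ hv) => k hk ->; rewrite dotZr.
by split => [/eqP|->]; rewrite ?mulr0 // mulf_eq0 (negPf hk) => /eqP.
Qed.

Lemma mkpt_incid v (l : line F) : v != 0 -> incid (mkpt v) l <-> dot v (val l) = 0.
Proof.
move=> hv; rewrite incidE; case: (mkpt_valZ hv) => k hk ->; rewrite dotZl.
by split => [/eqP|->]; rewrite ?mulr0 // mulf_eq0 (negPf hk) => /eqP.
Qed.

Lemma join_incid1 (X Y : point F) : X <> Y -> incid X (join X Y).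
Proof. by move=> h; rewrite /join incid_mkpt ?neq_cross // dotXl. Qed.
Lemma join_incid2 (X Y : point F) : X <> Y -> incid Y (join X Y).
Proof. by move=> h; rewrite /join incid_mkpt ?neq_cross // dotXr. Qed.
Lemma meet_incid1 (l m : line F) : l <> m -> incid (meet l m) l.
Proof. by move=> h; rewrite /meet mkpt_incid ?neq_cross // dotC dotXl. Qed.
Lemma meet_incid2 (l m : line F) : l <> m -> incid (meet l m) m.
Proof. by move=> h; rewrite /meet mkpt_incid ?neq_cross // dotC dotXr. Qed.

Lemma meet_uniq (l m : line F) (X : point F) : l <> m -> incid X l -> incid X m ->
  X = meet l m.
Proof.
move=> h /incidE hl /incidE hm; have hc := neq_cross h.
case: (perp2 hc hl hm) => k ek; case: (mkpt_valZ hc) => k' hk' e'.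
by apply: (@val_inj_prop _ _ _ (k / k')); rewrite /meet e' scalerA divfK.
Qed.

Lemma join_uniq (X Y : point F) (l : line F) : X <> Y -> incid X l -> incid Y l ->
  l = join X Y.
Proof.
move=> h /incidE hl /incidE hm; have hc := neq_cross h.
rewrite dotC in hl; rewrite dotC in hm.
case: (perp2 hc hl hm) => k ek; case: (mkpt_valZ hc) => k' hk' e'.
by apply: (@val_inj_prop _ _ _ (k / k')); rewrite /join e' scalerA divfK.
Qed.

End Inc.


Section Harm.
Variable F : fieldType.
Hypothesis h2 : (2 : F) != 0.
Implicit Types u v w z p q n x : 'rV[F]_3.

Definition hc (l1 m1 l2 m2 : F) := l1 * m2 != 0 /\ m1 * l2 = - (l1 * m2).

Lemma hc_nz l1 m1 l2 m2 : hc l1 m1 l2 m2 ->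
  [/\ l1 != 0, m1 != 0, l2 != 0 & m2 != 0].
Proof.
case=> h e; have h' : m1 * l2 != 0 by rewrite e oppr_eq0.
by move: h h'; rewrite !mulf_eq0 !negb_or => /andP[-> ->] /andP[-> ->].
Qed.

Lemma indep_comb u v a b : indep u v -> a *: u + b *: v = 0 -> a = 0 /\ b = 0.
Proof. by move=> hi; apply: hi. Qed.

Lemma comb_nz u v a b : indep u v -> (a != 0) || (b != 0) -> a *: u + b *: v != 0.
Proof.
move=> hi hab; apply/eqP => /hi [ea eb]; move: hab; by rewrite ea eb eqxx.
Qed.

Lemma mkpt_ne2 u v a b c d : indep u v -> a * d - b * c != 0 ->
  mkpt (a *: u + b *: v) <> mkpt (c *: u + d *: v).
Proof.
move=> hi hdet e.
have hab : (a != 0) || (b != 0).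
  by apply: contraNT hdet; rewrite negb_or !negbK => /andP[/eqP-> /eqP->]; rewrite !mul0r subr0.
have hcd : (c != 0) || (d != 0).
  by apply: contraNT hdet; rewrite negb_or !negbK => /andP[/eqP-> /eqP->]; rewrite !mulr0 subr0.
case: (mkpt_inj (comb_nz hi hab) (comb_nz hi hcd) e) => k hk ek.
have : (c *: u + d *: v) - k *: (a *: u + b *: v) = 0 by rewrite ek subrr.
rewrite (_ : c *: u + d *: v - k *: (a *: u + b *: v) = (c - k * a) *: u + (d - k * b) *: v); last by vec.
move/hi => [/subr0_eq ec /subr0_eq ed]; move: hdet; rewrite ec ed.
by rewrite (_ : a * (k * b) - b * (k * a) = 0) ?eqxx //; ring.
Qed.

Lemma uniq4P (A B C D : point F) : A <> B -> A <> C -> A <> D -> B <> C -> B <> D -> C <> D ->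
  uniq [:: val A; val B; val C; val D].
Proof.
move=> ab ac ad bc bd cd; rewrite /= !inE !negb_or.
by rewrite !neq_val.
Qed.

Lemma mkpt_u u v : mkpt u = mkpt (1 *: u + 0 *: v).
Proof. by rewrite scale1r scale0r addr0. Qed.
Lemma mkpt_v u v : mkpt v = mkpt (0 *: u + 1 *: v).
Proof. by rewrite scale1r scale0r add0r. Qed.

Lemma harm_uniq u v w z l1 m1 l2 m2 : indep u v ->
  w = l1 *: u + m1 *: v -> z = l2 *: u + m2 *: v -> hc l1 m1 l2 m2 ->
  uniq [:: val (mkpt u); val (mkpt v); val (mkpt w); val (mkpt z)].
Proof.
move=> hi -> -> H; have [n1 n2 n3 n4] := hc_nz H; case: H => H1 H2.
apply: uniq4P; rewrite ?(mkpt_u u v) ?(mkpt_v u v); apply: mkpt_ne2 => //.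
- by rewrite !mulr1 !mulr0 subr0 oner_eq0.
- by rewrite mul1r mul0r subr0.
- by rewrite mul1r mul0r subr0.
- by rewrite mul0r mul1r sub0r oppr_eq0.
- by rewrite mul0r mul1r sub0r oppr_eq0.
- by rewrite H2 opprK (_ : l1 * m2 + l1 * m2 = 2 * (l1 * m2)) ?mulf_neq0 //; ring.
Qed.

Lemma cross_comb (m : 'rV[F]_3) u v a b : cross m (a *: u + b *: v) = a *: cross m u + b *: cross m v.
Proof. vec. Qed.

Lemma dot_span u v a b : dot (a *: u + b *: v) (cross u v) = 0.
Proof. by rewrite dotDl !dotZl dotXl dotXr !mulr0 addr0. Qed.

Lemma incid_span x u v a b : x != 0 -> x = a *: u + b *: v -> cross u v != 0 ->
  incid (mkpt x) (mkpt (cross u v)).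
Proof.
move=> hx ex hc; rewrite mkpt_incid // ex; case: (mkpt_valZ hc) => k hk ->.
by rewrite dotZr dot_span mulr0.
Qed.

Lemma harm_vecE u v w z l1 m1 l2 m2 : indep u v ->
  w = l1 *: u + m1 *: v -> z = l2 *: u + m2 *: v -> w != 0 -> z != 0 ->
  harmonic_set (mkpt u) (mkpt v) (mkpt w) (mkpt z) <-> hc l1 m1 l2 m2.
Proof.
move=> hi ew ez hw hz; have [hu hv] := indep_nz hi.
case: (mkpt_valZ hu) => su hsu eu; case: (mkpt_valZ hv) => sv hsv ev.
case: (mkpt_valZ hw) => sw hsw e_w; case: (mkpt_valZ hz) => sz hsz e_z.
split.
- case=> _ _ [L1 [M1 [L2 [M2 [E1 [E2 [HL HR]]]]]]].
  rewrite e_w eu ev ew in E1; rewrite e_z eu ev ez in E2.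
  have : sw *: (l1 *: u + m1 *: v) - (L1 *: (su *: u) + M1 *: (sv *: v)) = 0 by rewrite E1 subrr.
  rewrite (_ : sw *: (l1 *: u + m1 *: v) - (L1 *: (su *: u) + M1 *: (sv *: v)) = (sw * l1 - L1 * su) *: u + (sw * m1 - M1 * sv) *: v); last by vec.
  move/hi => [/subr0_eq x1 /subr0_eq y1].
  have : sz *: (l2 *: u + m2 *: v) - (L2 *: (su *: u) + M2 *: (sv *: v)) = 0 by rewrite E2 subrr.
  rewrite (_ : sz *: (l2 *: u + m2 *: v) - (L2 *: (su *: u) + M2 *: (sv *: v)) = (sz * l2 - L2 * su) *: u + (sz * m2 - M2 * sv) *: v); last by vec.
  move/hi => [/subr0_eq x2 /subr0_eq y2].
  have el1 : l1 = L1 * su / sw by rewrite -x1 mulrC mulKf.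
  have em1 : m1 = M1 * sv / sw by rewrite -y1 mulrC mulKf.
  have el2 : l2 = L2 * su / sz by rewrite -x2 mulrC mulKf.
  have em2 : m2 = M2 * sv / sz by rewrite -y2 mulrC mulKf.
  split.
    by rewrite el1 em2 !mulf_neq0 ?invr_eq0 //; move: HL; rewrite mulf_eq0 negb_or => /andP[].
  have hLM : L1 * M2 != 0 by [].
  have HR' : M1 * L2 = - (L1 * M2) by rewrite -[M1 * L2](divfK hLM) -HR mulN1r.
  rewrite el1 em1 el2 em2.
  rewrite (_ : M1 * sv / sw * (L2 * su / sz) = (M1 * L2) * (su * sv / (sw * sz))); last by field; rewrite hsw hsz.
  by rewrite HR'; field; rewrite hsw hsz.
- move=> H; have [n1 n2 n3 n4] := hc_nz H; split.
  + exact: (harm_uniq hi ew ez H).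
  + have hc0 := indep_cross hi.
    exists (mkpt (cross u v)); split.
    * by apply: (@incid_span _ _ _ 1 0) => //; rewrite scale1r scale0r addr0.
    * by apply: (@incid_span _ _ _ 0 1) => //; rewrite scale1r scale0r add0r.
    * exact: (incid_span hw ew).
    * exact: (incid_span hz ez).
  + exists (sw * l1 / su), (sw * m1 / sv), (sz * l2 / su), (sz * m2 / sv).
    case: H => H1 H2.
    split; first by rewrite e_w eu ev ew; apply: vecP3; rewrite !cE; field; rewrite hsu hsv.
    split; first by rewrite e_z eu ev ez; apply: vecP3; rewrite !cE; field; rewrite hsu hsv.
    split; first by rewrite !mulf_neq0 ?invr_eq0 //; move: H1; rewrite mulf_eq0 negb_or => /andP[].
    rewrite (_ : sw * m1 / sv * (sz * l2 / su) = sw * sz / (su * sv) * (m1 * l2)); last by field; rewrite hsu hsv.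
    rewrite H2; field; by rewrite ?hsu ?hsv ?hsw ?hsz ?n1 ?n4.
Qed.

End Harm.


Section Pencil.
Variable F : fieldType.
Hypothesis h2 : (2 : F) != 0.
Implicit Types u v w z p q n x y : 'rV[F]_3.

Lemma incid_mm x y : x != 0 -> y != 0 -> incid (mkpt x) (mkpt y) <-> dot x y = 0.
Proof.
move=> hx hy; rewrite mkpt_incid //; case: (mkpt_valZ hy) => k hk ->; rewrite dotZr.
by split => [/eqP|->]; rewrite ?mulr0 // mulf_eq0 (negPf hk) => /eqP.
Qed.

Lemma meet_mk (m : line F) p : p != 0 -> cross (val m) p != 0 ->
  meet m (mkpt p) = mkpt (cross (val m) p).
Proof.
move=> hp hc; rewrite /meet; case: (mkpt_valZ hp) => k hk ->.
by rewrite crossZr mkptZ.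
Qed.

Lemma comb_nz' u v a b : indep u v -> a *: u + b *: v != 0 -> (a != 0) || (b != 0).
Proof.
move=> hi; apply: contraNT; rewrite negb_or !negbK => /andP[/eqP-> /eqP->].
by rewrite !scale0r addr0.
Qed.

Lemma pencilE p1 p2 p3 p4 l1 m1 l2 m2 : indep p1 p2 ->
  p3 = l1 *: p1 + m1 *: p2 -> p4 = l2 *: p1 + m2 *: p2 -> p3 != 0 -> p4 != 0 ->
  harmonic_pencil (mkpt p1) (mkpt p2) (mkpt p3) (mkpt p4) <-> hc l1 m1 l2 m2.
Proof.
move=> hi e3 e4 h3 h4; have [hp1 hp2] := indep_nz hi; have hc12 := indep_cross hi.
have key : forall m : line F, dot (cross p1 p2) (val m) != 0 ->
    harmonic_set (meet m (mkpt p1)) (meet m (mkpt p2)) (meet m (mkpt p3)) (meet m (mkpt p4))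
    <-> hc l1 m1 l2 m2.
  move=> m hm; set mv := val m.
  have hmv : mv != 0 by apply: val_nz.
  have huv : cross (cross mv p1) (cross mv p2) != 0.
    by rewrite crossXXm scaler_eq0 negb_or hmv andbT dotC.
  have hi' := cross_indep huv; have [hu hv] := indep_nz hi'.
  have e3' : cross mv p3 = l1 *: cross mv p1 + m1 *: cross mv p2 by rewrite e3 cross_comb.
  have e4' : cross mv p4 = l2 *: cross mv p1 + m2 *: cross mv p2 by rewrite e4 cross_comb.
  have hw : cross mv p3 != 0 by rewrite e3'; apply: comb_nz => //; apply: (comb_nz' hi); rewrite -e3.
  have hz : cross mv p4 != 0 by rewrite e4'; apply: comb_nz => //; apply: (comb_nz' hi); rewrite -e4.
  rewrite !meet_mk //.
  exact: (harm_vecE h2 hi' e3' e4' hw hz).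
split.
- case=> _ _ [m [hm hs]]; apply/(key m) => //.
  have hO : cross p1 p2 != 0 := hc12.
  apply/negP => /eqP hd; apply: (hm (mkpt (cross p1 p2))).
  + by rewrite incid_mm // dotC dotXl.
  + by rewrite incid_mm // dotC dotXr.
  + by rewrite mkpt_incid.
- move=> H; split.
  + exact: (harm_uniq h2 hi e3 e4 H).
  + exists (mkpt (cross p1 p2)); split; apply/incid_mm => //; rewrite dotC.
    * exact: dotXl.
    * exact: dotXr.
    * by rewrite e3 dot_span.
    * by rewrite e4 dot_span.
  + case: (exists_dot hc12) => q hq.
    have hq0 : q != 0 by apply: contraNneq hq => ->; rewrite dot0r.
    exists (mkpt q); split; last first.
      apply/(key (mkpt q)); last by [].
      by case: (mkpt_valZ hq0) => k hk ->; rewrite dotZr mulf_neq0.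
    move=> O /incid_mkpt - /(_ hp1) o1 /incid_mkpt - /(_ hp2) o2.
    rewrite incid_mkpt // => o3.
    case: (perp2 hc12 o1 o2) => k ek; move: o3; rewrite ek dotZl => /eqP.
    rewrite mulf_eq0 (negPf hq) orbF => /eqP k0.
    by move: (val_nz O); rewrite ek k0 scale0r eqxx.
Qed.

End Pencil.


Ltac nz := first [ assumption | apply: mulf_neq0; nz | rewrite oppr_eq0; nz
  | rewrite invr_eq0; nz | apply: expf_neq0; nz ].

Section Conic.
Variable F : fieldType.
Hypothesis h2 : (2 : F) != 0.
Variables a b c d : 'rV[F]_3.
Implicit Types u v w z p q n x y : 'rV[F]_3.

Definition xa x := dot x (cross b c).
Definition xb x := dot x (cross c a).
Definition xc x := dot x (cross a b).
Definition Dl := xa a.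
Definition da := xa d.
Definition db := xb d.
Definition dc := xc d.

Hypothesis hD : Dl != 0.
Hypothesis hda : da != 0.
Hypothesis hdb : db != 0.
Hypothesis hdc : dc != 0.

Lemma basisE x : Dl *: x = xa x *: a + xb x *: b + xc x *: c.
Proof. rewrite /Dl /xa /xb /xc /dot; vec. Qed.

Lemma dualE w : Dl *: w = dot w a *: cross b c + dot w b *: cross c a + dot w c *: cross a b.
Proof. rewrite /Dl /xa /dot; vec. Qed.

Lemma xaa : xa a = Dl. Proof. by []. Qed.
Lemma xab : xa b = 0. Proof. rewrite /xa /dot !cE; ring. Qed.
Lemma xac : xa c = 0. Proof. rewrite /xa /dot !cE; ring. Qed.
Lemma xba : xb a = 0. Proof. rewrite /xb /dot !cE; ring. Qed.
Lemma xbb : xb b = Dl. Proof. rewrite /xb /Dl /xa /dot !cE; ring. Qed.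
Lemma xbc : xb c = 0. Proof. rewrite /xb /dot !cE; ring. Qed.
Lemma xca : xc a = 0. Proof. rewrite /xc /dot !cE; ring. Qed.
Lemma xcb : xc b = 0. Proof. rewrite /xc /dot !cE; ring. Qed.
Lemma xcc : xc c = Dl. Proof. rewrite /xc /Dl /xa /dot !cE; ring. Qed.
Lemma xad : xa d = da. Proof. by []. Qed.
Lemma xbd : xb d = db. Proof. by []. Qed.
Lemma xcd : xc d = dc. Proof. by []. Qed.
Definition xvals := (xaa, xab, xac, xba, xbb, xbc, xca, xcb, xcc, xad, xbd, xcd).

Lemma xaD x y : xa (x + y) = xa x + xa y. Proof. exact: dotDl. Qed.
Lemma xbD x y : xb (x + y) = xb x + xb y. Proof. exact: dotDl. Qed.
Lemma xcD x y : xc (x + y) = xc x + xc y. Proof. exact: dotDl. Qed.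
Lemma xaZ k x : xa (k *: x) = k * xa x. Proof. exact: dotZl. Qed.
Lemma xbZ k x : xb (k *: x) = k * xb x. Proof. exact: dotZl. Qed.
Lemma xcZ k x : xc (k *: x) = k * xc x. Proof. exact: dotZl. Qed.
Lemma xaB x y : xa (x - y) = xa x - xa y. Proof. exact: dotBl. Qed.
Lemma xbB x y : xb (x - y) = xb x - xb y. Proof. exact: dotBl. Qed.
Lemma xcB x y : xc (x - y) = xc x - xc y. Proof. exact: dotBl. Qed.
Definition xlin := (xaB, xbB, xcB, xaD, xbD, xcD, xaZ, xbZ, xcZ).

Lemma x0_eq0 x : xa x = 0 -> xb x = 0 -> xc x = 0 -> x = 0.
Proof.
move=> h1 h2' h3; apply: (scalerI hD); by rewrite basisE h1 h2' h3 !scale0r !addr0 scaler0.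
Qed.

Definition bf x y := db * (xa x * xc y + xc x * xa y) + da * (xb x * xc y + xc x * xb y)
   - 2 * dc * (xa x * xb y + xb x * xa y).

Lemma bfC x y : bf x y = bf y x. Proof. rewrite /bf; ring. Qed.
Lemma bfDl x y z : bf (x + y) z = bf x z + bf y z. Proof. rewrite /bf !xlin; ring. Qed.
Lemma bfDr x y z : bf z (x + y) = bf z x + bf z y. Proof. rewrite /bf !xlin; ring. Qed.
Lemma bfZl k x y : bf (k *: x) y = k * bf x y. Proof. rewrite /bf !xlin; ring. Qed.
Lemma bfZr k x y : bf x (k *: y) = k * bf x y. Proof. rewrite /bf !xlin; ring. Qed.
Lemma bfBl x y z : bf (x - y) z = bf x z - bf y z. Proof. rewrite /bf !xlin; ring. Qed.
Lemma bfBr x y z : bf z (x - y) = bf z x - bf z y. Proof. rewrite /bf !xlin; ring. Qed.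
Lemma bfNl x y : bf (- x) y = - bf x y. Proof. rewrite /bf /xa /xb /xc !dotNl; ring. Qed.
Lemma bfNr x y : bf x (- y) = - bf x y. Proof. rewrite /bf /xa /xb /xc !dotNl; ring. Qed.
Definition bflin := (bfBl, bfBr, bfDl, bfDr, bfZl, bfZr, bfNl, bfNr).

Definition pv y := (db * xc y - 2 * dc * xb y) *: cross b c + (da * xc y - 2 * dc * xa y) *: cross c a
   + (db * xa y + da * xb y) *: cross a b.

Lemma dot_pv x y : dot x (pv y) = bf x y.
Proof.
rewrite /pv /bf /xa /xb /xc !dotDr !dotZr; ring.
Qed.

Lemma pvZ k y : pv (k *: y) = k *: pv y.
Proof. rewrite /pv !xlin; vec. Qed.

Lemma pvD x y : pv (x + y) = pv x + pv y.
Proof. rewrite /pv !xlin; vec. Qed.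

Definition ka w := dot w a.
Definition kb w := dot w b.
Definition kc w := dot w c.
Definition Lc w := (2 * dc * kc w + db * kb w + da * ka w) / (2 * da * db).
Definition La w := (da * Lc w - kb w) / (2 * dc).
Definition Lb w := (db * Lc w - ka w) / (2 * dc).
Definition rv w := Dl^-1 *: (La w *: a + Lb w *: b + Lc w *: c).

Lemma xa_rv w : xa (rv w) = La w.
Proof. rewrite /rv !xlin !xvals; field; exact: hD. Qed.
Lemma xb_rv w : xb (rv w) = Lb w.
Proof. rewrite /rv !xlin !xvals; field; exact: hD. Qed.
Lemma xc_rv w : xc (rv w) = Lc w.
Proof. rewrite /rv !xlin !xvals; field; exact: hD. Qed.

Lemma pv_rv w : pv (rv w) = Dl *: w.
Proof.
rewrite dualE /pv xa_rv xb_rv xc_rv -/(ka w) -/(kb w) -/(kc w).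
have h2dc : 2 * dc != 0 by rewrite mulf_neq0.
have h2dadb : 2 * da * db != 0 by rewrite !mulf_neq0.
congr (_ *: _ + _ *: _ + _ *: _); rewrite /La /Lb /Lc; field; by rewrite ?h2 ?hda ?hdb ?hdc.
Qed.

Lemma ka_pv y : ka (pv y) = Dl * (db * xc y - 2 * dc * xb y).
Proof. rewrite /ka dotC dot_pv /bf !xvals; ring. Qed.
Lemma kb_pv y : kb (pv y) = Dl * (da * xc y - 2 * dc * xa y).
Proof. rewrite /kb dotC dot_pv /bf !xvals; ring. Qed.
Lemma kc_pv y : kc (pv y) = Dl * (db * xa y + da * xb y).
Proof. rewrite /kc dotC dot_pv /bf !xvals; ring. Qed.

Lemma rv_pv y : rv (pv y) = Dl *: y.
Proof.
rewrite /rv basisE.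
have e1 : La (pv y) = Dl * xa y.
  rewrite /La /Lc ka_pv kb_pv kc_pv; field; by rewrite ?h2 ?hda ?hdb ?hdc.
have e2 : Lb (pv y) = Dl * xb y.
  rewrite /Lb /Lc ka_pv kb_pv kc_pv; field; by rewrite ?h2 ?hda ?hdb ?hdc.
have e3 : Lc (pv y) = Dl * xc y.
  rewrite /Lc ka_pv kb_pv kc_pv; field; by rewrite ?h2 ?hda ?hdb ?hdc.
by rewrite e1 e2 e3 -!scalerA -!scalerDr scalerA mulVf // scale1r.
Qed.

Lemma pv_inj x y : pv x = pv y -> x = y.
Proof. by move=> e; apply: (scalerI hD); rewrite -!rv_pv e. Qed.

Lemma rv_inj x y : rv x = rv y -> x = y.
Proof. by move=> e; apply: (scalerI hD); rewrite -!pv_rv e. Qed.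

Lemma rvZ k w : rv (k *: w) = k *: rv w.
Proof. by apply: pv_inj; rewrite pvZ !pv_rv !scalerA mulrC. Qed.

Lemma rvD v w : rv (v + w) = rv v + rv w.
Proof. by apply: pv_inj; rewrite pvD !pv_rv scalerDr. Qed.

Lemma rv0 : rv 0 = 0.
Proof. by have := rvZ 0 0; rewrite !scale0r. Qed.

Lemma pv0 : pv 0 = 0.
Proof. by have := pvZ 0 0; rewrite !scale0r. Qed.

Lemma pv_nz y : y != 0 -> pv y != 0.
Proof. by apply: contraNneq => e; apply/eqP; apply: pv_inj; rewrite e pv0. Qed.

Lemma rv_nz y : y != 0 -> rv y != 0.
Proof. by apply: contraNneq => e; apply/eqP; apply: rv_inj; rewrite e rv0. Qed.

Lemma rv_comb u v s t : rv (s *: u + t *: v) = s *: rv u + t *: rv v.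
Proof. by rewrite rvD !rvZ. Qed.

Definition pol (P : point F) : line F := mkpt (pv (val P)).
Definition polinv (l : line F) : point F := mkpt (rv (val l)).

Lemma pol_polinv l : pol (polinv l) = l.
Proof.
rewrite /pol /polinv; have h := rv_nz (val_nz l).
case: (mkpt_valZ h) => k hk ->; rewrite pvZ pv_rv scalerA mkptZ ?mkpt_val ?val_nz //.
by rewrite mulf_neq0.
Qed.

Lemma polinv_pol P : polinv (pol P) = P.
Proof.
rewrite /pol /polinv; have h := pv_nz (val_nz P).
case: (mkpt_valZ h) => k hk ->; rewrite rvZ rv_pv scalerA mkptZ ?mkpt_val ?val_nz //.
by rewrite mulf_neq0.
Qed.

Lemma incid_pol P Q : incid P (pol Q) <-> bf (val P) (val Q) = 0.
Proof. by rewrite /pol incid_mkpt ?pv_nz ?val_nz // dot_pv. Qed.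

Lemma polarity_pol : polarity pol.
Proof.
split; first by exists polinv; [exact: polinv_pol | exact: pol_polinv].
by move=> P Q; rewrite !incid_pol bfC.
Qed.

Lemma pol_inj (P Q : point F) : pol P = pol Q -> P = Q.
Proof. by move=> e; rewrite -(polinv_pol P) e polinv_pol. Qed.

Lemma on_conic P : incid P (pol P) <-> bf (val P) (val P) = 0.
Proof. exact: incid_pol. Qed.

Lemma conj_eq (P Q : point F) : bf (val P) (val P) = 0 -> bf (val Q) (val Q) = 0 ->
  bf (val P) (val Q) = 0 -> P = Q.
Proof.
move=> hP hQ hPQ; case: (@eqP _ P Q) => [//|ne]; exfalso.
have e1 : pol P = join P Q.
  by apply: join_uniq => //; rewrite incid_pol // bfC.
have e2 : pol Q = join P Q.
  by apply: join_uniq => //; rewrite incid_pol // bfC.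
by apply: ne; apply: pol_inj; rewrite e1 e2.
Qed.

Definition lam1 z := - xa z / xc z.
Definition mu1 z := - xb z / xc z.
Definition lam2 z := (da * xc z - dc * xa z) / (Dl * xc z).
Definition mu2 z := (db * xc z - dc * xb z) / (Dl * xc z).

Lemma cross_key z : xa z *: cross z a + xb z *: cross z b + xc z *: cross z c = 0.
Proof.
have := f_equal (cross z) (basisE z); rewrite crossZr cross0 scaler0.
by rewrite !crossDr !crossZr => <-.
Qed.

Lemma coeff3 z : xc z != 0 -> cross z c = lam1 z *: cross z a + mu1 z *: cross z b.
Proof.
move=> hz; apply: (scalerI hz); have := cross_key z.
rewrite scalerDr !scalerA (_ : xc z * lam1 z = - xa z); last by rewrite /lam1; field.
rewrite (_ : xc z * mu1 z = - xb z); last by rewrite /mu1; field.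
move/eqP; rewrite addrC addr_eq0 => /eqP ->; rewrite opprD !scaleNr //.
Qed.

Lemma coeff4 z : xc z != 0 -> cross z d = lam2 z *: cross z a + mu2 z *: cross z b.
Proof.
move=> hz; have e := f_equal (cross z) (basisE d).
rewrite crossZr !crossDr !crossZr !xvals (coeff3 hz) in e.
apply: (scalerI hD); rewrite e.
rewrite /lam2 /mu2 /lam1 /mu1; apply: vecP3; rewrite !cE; field; by rewrite hz hD.
Qed.

Lemma cross_zazb z : cross (cross z a) (cross z b) = xc z *: z.
Proof. by rewrite crossXXm. Qed.

Lemma bf_hcE z : xc z != 0 ->
  bf z z = - 2 * Dl * xc z ^+ 2 * (mu1 z * lam2 z + lam1 z * mu2 z).
Proof. move=> hz; rewrite /bf /lam1 /lam2 /mu1 /mu2; field; by rewrite hz hD. Qed.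

Lemma hc_conic_fwd z : xc z != 0 -> hc (lam1 z) (mu1 z) (lam2 z) (mu2 z) -> bf z z = 0.
Proof. by move=> hz [_ e]; rewrite bf_hcE // e addrC subrr mulr0. Qed.

Lemma tangent_gen p1 p2 p3 w0 l1 m1 l2 m2 (l : line F) : indep p1 p2 ->
  p3 = l1 *: p1 + m1 *: p2 -> p3 != 0 -> w0 = l2 *: p1 + m2 *: p2 -> hc l1 m1 l2 m2 ->
  harmonic_pencil (mkpt p1) (mkpt p2) (mkpt p3) l -> dot (val l) (cross p1 p2) = 0 ->
  l = mkpt w0.
Proof.
move=> hi e3 h3 ew H hp hl; have hc12 := indep_cross hi.
case: (span2 hc12 hl) => s [t el].
have hl0 : val l != 0 := val_nz l.
rewrite -(mkpt_val l) in hp.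
have H' := proj1 (pencilE h2 hi e3 el h3 hl0) hp.
have [n1 n2 n3 n4] := hc_nz H; have [n1' n2' n3' n4'] := hc_nz H'.
case: H => _ e; case: H' => _ e'.
have evl : val l = (t / m2) *: w0.
  rewrite el ew scalerDr !scalerA; congr (_ *: _ + _ *: _); last by field.
  apply: (mulfI n2); rewrite e' (_ : m1 * (t / m2 * l2) = t / m2 * (m1 * l2)); last by ring.
  by rewrite e; field.
have ht : t / m2 != 0 by rewrite mulf_neq0 ?invr_eq0.
have hw0 : w0 != 0.
  by apply/eqP => e0; move: (val_nz l); rewrite evl e0 scaler0 eqxx.
by rewrite -(mkpt_val l) evl mkptZ.
Qed.

Variables A B C D : point F.
Hypotheses (eA : val A = a) (eB : val B = b) (eC : val C = c) (eD : val D = d).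

Lemma pt_of (Z P : point F) k : Dl *: val Z = k *: val P -> Z = P.
Proof.
move=> e; apply: (@val_inj_prop _ _ _ (k / Dl)).
by apply: (scalerI hD); rewrite e scalerA mulrCA mulfV // mulr1.
Qed.

Lemma hc_conic_bwd (Z : point F) : Z <> A -> Z <> B -> Z <> C -> Z <> D ->
  bf (val Z) (val Z) = 0 -> xc (val Z) != 0 /\ hc (lam1 (val Z)) (mu1 (val Z)) (lam2 (val Z)) (mu2 (val Z)).
Proof.
move=> nA nB nC nD hz; set z := val Z.
have bz := basisE z.
have h2dc : 2 * dc != 0 by rewrite mulf_neq0.
have hzc : xc z != 0.
  apply/eqP => ec.
  have : 2 * dc * (2 * (xa z * xb z)) = 0.
    rewrite (_ : 2 * dc * (2 * (xa z * xb z)) = - bf z z); first by rewrite hz oppr0.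
    by rewrite /bf ec; ring.
  move/eqP; rewrite mulf_eq0 (negPf h2dc) /= mulf_eq0 (negPf h2) /= mulf_eq0 => /orP[] /eqP e.
  - by apply: nB; apply: (@pt_of _ _ (xb z)); rewrite bz e ec !scale0r add0r addr0 eB.
  - by apply: nA; apply: (@pt_of _ _ (xa z)); rewrite bz e ec !scale0r !addr0 eA.
split => //.
have hza : xa z != 0.
  apply/eqP => ea.
  have : 2 * da * (xb z * xc z) = 0.
    by rewrite -hz /bf ea; ring.
  move/eqP; rewrite mulf_eq0 mulf_eq0 (negPf h2) (negPf hda) /= mulf_eq0 (negPf hzc) orbF => /eqP eb.
  by apply: nC; apply: (@pt_of _ _ (xc z)); rewrite bz ea eb !scale0r !add0r eC.
have hm2 : db * xc z - dc * xb z != 0.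
  apply/eqP => /subr0_eq e1.
  have hzb : xb z != 0.
    apply/eqP => eb; move: e1; rewrite eb mulr0 => /eqP; rewrite mulf_eq0 (negPf hdb) (negPf hzc).
    by [].
  have : 2 * xb z * (da * xc z - dc * xa z) = 0.
    rewrite -hz /bf.
    rewrite (_ : db * (xa z * xc z + xc z * xa z) = 2 * xa z * (db * xc z)); last by ring.
    rewrite e1; ring.
  move/eqP; rewrite mulf_eq0 mulf_eq0 (negPf h2) (negPf hzb) /= => /eqP /subr0_eq e2.
  apply: nD; apply: (@pt_of _ _ (xc z / dc * Dl)); rewrite eD bz -scalerA.
  rewrite basisE !scalerDr !scalerA !xvals.
  have ea : xa z = xc z / dc * da by rewrite -[xa z](mulKf hdc) -e2; field.
  have eb : xb z = xc z / dc * db by rewrite -[xb z](mulKf hdc) -e1; field.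
  congr (_ *: _ + _ *: _ + _ *: _); rewrite ?ea ?eb; field; by [].
split.
  rewrite /lam1 /mu2 mulf_neq0 //.
    by rewrite mulf_neq0 ?oppr_eq0 ?invr_eq0.
  by rewrite mulf_neq0 // invr_eq0 mulf_neq0.
have hK : - 2 * Dl * xc z ^+ 2 != 0 by rewrite !mulf_neq0 ?oppr_eq0 ?expf_neq0.
have := bf_hcE hzc; rewrite hz => /esym /eqP; rewrite mulf_eq0 (negPf hK) /=.
by rewrite addr_eq0 => /eqP.
Qed.

Lemma bf_aa : bf a a = 0. Proof. rewrite /bf !xvals; ring. Qed.
Lemma bf_bb : bf b b = 0. Proof. rewrite /bf !xvals; ring. Qed.
Lemma bf_cc : bf c c = 0. Proof. rewrite /bf !xvals; ring. Qed.
Lemma bf_dd : bf d d = 0. Proof. rewrite /bf !xvals; ring. Qed.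

Lemma uniq12 (l1 l2 l3 l4 : line F) : uniq [:: val l1; val l2; val l3; val l4] -> l1 <> l2.
Proof. by rewrite /= !inE => /andP[/norP[h _] _] e; move: h; rewrite e eqxx. Qed.

Lemma pencil_at (Z : point F) : Z <> A -> Z <> B -> Z <> C -> Z <> D ->
  harmonic_pencil (join Z A) (join Z B) (join Z C) (join Z D) <-> bf (val Z) (val Z) = 0.
Proof.
move=> nA nB nC nD; rewrite /join.
have p1 := neq_cross nA; have p2 := neq_cross nB; have p3 := neq_cross nC; have p4 := neq_cross nD.
rewrite eA eB eC eD in p1 p2 p3 p4 *; set z := val Z.
split.
- move=> hp; have ne : mkpt (cross z a) <> mkpt (cross z b) by case: hp => /uniq12.
  have hi := mkpt_neq_indep p1 p2 ne.
  have hzc : xc z != 0.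
    apply/eqP => e; move: (indep_cross hi); rewrite cross_zazb e scale0r eqxx //.
  apply: hc_conic_fwd => //.
  by apply/(pencilE h2 hi (coeff3 hzc) (coeff4 hzc) p3 p4).
- move=> hz; case: (hc_conic_bwd nA nB nC nD hz) => hzc H.
  have hi : indep (cross z a) (cross z b).
    by apply: cross_indep; rewrite cross_zazb scaler_eq0 negb_or hzc val_nz.
  by apply/(pencilE h2 hi (coeff3 hzc) (coeff4 hzc) p3 p4).
Qed.

Lemma curve_iff (Z : point F) : harmonic_curve A C B D Z <-> bf (val Z) (val Z) = 0.
Proof.
split.
- case=> [->|[->|[->|[->|[nA nC nB nD hp]]]]];
    rewrite ?eA ?eB ?eC ?eD ?bf_aa ?bf_bb ?bf_cc ?bf_dd //.
  by apply/(pencil_at nA nB nC nD).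
- move=> hz; rewrite /harmonic_curve.
  case: (@eqP _ Z A) => [->|nA]; first by left.
  case: (@eqP _ Z C) => [->|nC]; first by right; left.
  case: (@eqP _ Z B) => [->|nB]; first by right; right; left.
  case: (@eqP _ Z D) => [->|nD]; first by right; right; right; left.
  by right; right; right; right; split => //; apply/(pencil_at nA nB nC nD).
Qed.

Lemma incid_pol_mk v (Q : point F) : v != 0 -> incid (mkpt v) (pol Q) <-> bf v (val Q) = 0.
Proof.
move=> hv; rewrite incid_pol; case: (mkpt_valZ hv) => k hk ->; rewrite bfZl.
by split => [/eqP|->]; rewrite ?mulr0 // mulf_eq0 (negPf hk) => /eqP.
Qed.

Lemma curve_mk v : v != 0 -> harmonic_curve A C B D (mkpt v) <-> bf v v = 0.
Proof.
move=> hv; rewrite curve_iff; case: (mkpt_valZ hv) => k hk ->; rewrite bfZl bfZr mulrA.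
by split => [/eqP|->]; rewrite ?mulr0 // mulf_eq0 (negPf (mulf_neq0 hk hk)) => /eqP.
Qed.

Lemma ey_gen (y p : 'rV[F]_3) s t : t != 0 -> y = (s / t) *: p + (- t^-1) *: (s *: p - t *: y).
Proof. move=> ht; apply: vecP3; rewrite !cE; field; exact: ht. Qed.

Lemma H_gen (s t : F) : s != 0 -> t != 0 -> hc s 1 (s / t) (- t^-1).
Proof.
move=> hs ht; split; first by rewrite mulf_neq0 ?oppr_eq0 ?invr_eq0.
by rewrite mul1r mulrN opprK.
Qed.

Lemma refl_onto (P : point F) : ~ harmonic_curve A C B D P ->
  refl_maps_onto P (pol P) (harmonic_curve A C B D).
Proof.
move=> nP; have hpp : bf (val P) (val P) != 0 by apply/eqP => /curve_iff.
set p := val P in hpp *.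
split.
- move=> X Y hr hX; case: hr => [[eX eY]|[[_ eY]|[nXP nXm hs]]].
    by exfalso; apply: nP; rewrite -eX.
    by rewrite eY.
  set M := meet (join X P) (pol P) in hs.
  have hne : join X P <> pol P by move=> e; apply: nXm; rewrite -e; apply: join_incid1.
  have hM : bf (val M) p = 0 by apply/incid_pol; apply: meet_incid2.
  have hMp : bf p (val M) = 0 by rewrite bfC.
  move/curve_iff: hX => hX; apply/curve_iff.
  case: hs => _ _ [L1 [M1 [L2 [M2 [ex [ey [hLM hr]]]]]]].
  set m := val M in hM hMp ex ey.
  have Ex : bf (val X) (val X) = L1 ^+ 2 * bf p p + M1 ^+ 2 * bf m m.
    by rewrite ex !bflin hM hMp; ring.
  have Ey : bf (val Y) (val Y) = L2 ^+ 2 * bf p p + M2 ^+ 2 * bf m m.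
    by rewrite ey !bflin hM hMp; ring.
  have hr' : M1 * L2 = - (L1 * M2) by rewrite -[M1 * L2](divfK hLM) -hr mulN1r.
  have hL1 : L1 != 0 by move: hLM; rewrite mulf_eq0 negb_or => /andP[].
  apply: (mulfI (expf_neq0 2 hL1)); rewrite mulr0 Ey.
  rewrite (_ : L1 ^+ 2 * (L2 ^+ 2 * bf p p + M2 ^+ 2 * bf m m) =
     L2 ^+ 2 * (L1 ^+ 2 * bf p p) + (L1 * M2) ^+ 2 * bf m m); last by ring.
  rewrite -[L1 * M2]opprK -hr' sqrrN.
  rewrite (_ : L2 ^+ 2 * (L1 ^+ 2 * bf p p) + (M1 * L2) ^+ 2 * bf m m =
     L2 ^+ 2 * bf (val X) (val X)); last by rewrite Ex; ring.
  by rewrite hX mulr0.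
- move=> Y hY; have hyy := proj1 (curve_iff Y) hY; set y := val Y in hyy.
  case: (eqVneq (bf y p) 0) => hyp.
    exists Y; split; first exact: hY.
    by right; left; split; [apply/incid_pol; exact: hyp | ].
  have nYP : Y <> P by move=> e; apply: nP; rewrite -e.
  set m0 := bf y p *: p - bf p p *: y.
  set x0 := bf y p *: p + m0.
  have hcpy : cross p y != 0 by apply: neq_cross => e; apply: nYP.
  have hi : indep p m0.
    apply: cross_indep; rewrite /m0 crossBr !crossZr cross0 scaler0 sub0r oppr_eq0.
    by rewrite scaler_eq0 negb_or hpp.
  have ex0 : x0 = bf y p *: p + 1 *: m0 by rewrite scale1r.
  have ey : y = (bf y p / bf p p) *: p + (- (bf p p)^-1) *: m0.
    exact: (@ey_gen y p (bf y p) (bf p p) hpp).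
  have hx0 : x0 != 0 by rewrite ex0; apply: (comb_nz hi); rewrite oner_eq0 orbT.
  have hy0 : y != 0 := val_nz Y.
  have H : hc (bf y p) 1 (bf y p / bf p p) (- (bf p p)^-1) by exact: (H_gen hyp hpp).
  have hs := proj2 (harm_vecE h2 hi ex0 ey hx0 hy0) H.
  set X := mkpt x0.
  have bx0p : bf x0 p = bf y p * bf p p by rewrite /x0 /m0 !bflin; ring.
  have nXm : ~ incid X (pol P).
    move=> h; have := proj1 (incid_pol_mk P hx0) h; rewrite bx0p => /eqP.
    by rewrite mulf_eq0 (negPf hyp) (negPf hpp).
  have nXP : X <> P.
    rewrite -(mkpt_val P) -/p (mkpt_u p m0) /X ex0; apply: (mkpt_ne2 hi).
    by rewrite mulr0 mulr1 sub0r oppr_eq0 oner_eq0.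
  have hjne : join X P <> pol P by move=> e; apply: nXm; rewrite -e; apply: join_incid1.
  have hm0 : m0 != 0 by case: (indep_nz hi).
  have eM : mkpt m0 = meet (join X P) (pol P).
    apply: meet_uniq; first exact: hjne.
      rewrite (mkpt_incid _ hm0) /join; case: (mkpt_valZ (neq_cross nXP)) => k hk ->.
      case: (mkpt_valZ hx0) => k' hk' ->; rewrite -/p crossZl !dotZr.
      have em0 : m0 = x0 - bf y p *: p by rewrite /x0 addrAC subrr add0r.
      by rewrite em0 dotBl dotZl dotXl dotXr mulr0 subr0 !mulr0.
    by rewrite (incid_pol_mk _ hm0) /m0 !bflin; ring.
  exists X; split.
    by apply/(curve_mk hx0); rewrite /x0 /m0 !bflin (bfC p y) hyy; ring.
  right; right; split; [exact: nXP | exact: nXm | ].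
  rewrite -eM; have eP : mkpt p = P := mkpt_val P; have eY : mkpt y = Y := mkpt_val Y.
  by rewrite eP eY in hs.
Qed.

Lemma tangent_conc (V X Y : point F) (l3 l : line F) : V <> X -> V <> Y ->
  harmonic_pencil (join V X) (join V Y) l3 l -> incid V l.
Proof.
move=> nX nY [hu [O [o1 o2 o3 o4]] _].
case: (@eqP _ O V) => [<- //|nO].
have e1 : join V X = join V O.
  by apply: join_uniq; [move=> e; apply: nO; rewrite e | exact: join_incid1 | exact: o1].
have e2 : join V Y = join V O.
  by apply: join_uniq; [move=> e; apply: nO; rewrite e | exact: join_incid1 | exact: o2].
by case: (uniq12 hu); rewrite e1 e2.
Qed.

Lemma tangent_dot (V X Y : point F) (l3 l : line F) : V <> X -> V <> Y ->
  harmonic_pencil (join V X) (join V Y) l3 l ->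
  dot (val l) (cross (cross (val V) (val X)) (cross (val V) (val Y))) = 0.
Proof.
move=> nX nY hp; have /incidE := tangent_conc nX nY hp.
by rewrite crossXXm dotZr dotC => ->; rewrite mulr0.
Qed.

Lemma crossd x : Dl *: cross x d = da *: cross x a + db *: cross x b + dc *: cross x c.
Proof. by rewrite -crossZr basisE !crossDr !crossZr. Qed.

Lemma nAB : A <> B.
Proof. move=> e; move: hD; rewrite /Dl /xa -eA -eB e dotXl eqxx //. Qed.
Lemma nAC : A <> C.
Proof. move=> e; move: hD; rewrite /Dl /xa -eA -eC e dotXr eqxx //. Qed.
Lemma nAD : A <> D.
Proof. move=> e; move: hdb; rewrite /db /xb -eA -eD e dotXr eqxx //. Qed.
Lemma nBC : B <> C.
Proof. move=> e; move: hD; rewrite /Dl /xa -eB -eC e cross0 dot0r eqxx //. Qed.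
Lemma nBD : B <> D.
Proof. move=> e; move: hda; rewrite /da /xa -eB -eD e dotXl eqxx //. Qed.
Lemma nCD : C <> D.
Proof. move=> e; move: hda; rewrite /da /xa -eC -eD e dotXr eqxx //. Qed.

Lemma tanA (t : line F) : tangent_line (join A C) (join A D) (join A B) t -> t = pol A.
Proof.
move=> ht; have hd := tangent_dot nAC nAD ht; rewrite eA eC eD in hd.
move: ht; rewrite /tangent_line /join eA eB eC eD => ht; rewrite /pol eA.
have ha : a != 0 by rewrite -eA val_nz.
have hdet : dot a (cross c d) = - db by rewrite /db /xb /dot !cE; ring.
have hi : indep (cross a c) (cross a d).
  by apply: cross_indep; rewrite crossXXm hdet scaler_eq0 negb_or oppr_eq0 hdb.
have k := crossd a; rewrite cross0 scaler0 add0r in k.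
have e3 : cross a b = (- dc / db) *: cross a c + (Dl / db) *: cross a d.
  rewrite (_ : (Dl / db) *: cross a d = db^-1 *: (Dl *: cross a d)); last by rewrite scalerA mulrC.
  rewrite k; apply: vecP3; rewrite !cE; field; exact: hdb.
have ew : pv a = (Dl * dc) *: cross a c + (Dl ^+ 2) *: cross a d.
  rewrite /pv !xvals (crossC c a).
  rewrite (_ : Dl ^+ 2 *: cross a d = Dl *: (Dl *: cross a d)); last by rewrite scalerA.
  rewrite k; apply: vecP3; rewrite !cE; ring.
apply: (tangent_gen hi e3 _ ew _ ht hd).
  by rewrite -eA -eB; apply: neq_cross; exact: nAB.
split.
  nz.
field; exact: hdb.
Qed.

Lemma crossdr x : Dl *: cross d x = da *: cross a x + db *: cross b x + dc *: cross c x.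
Proof. by rewrite -crossZl basisE !crossDl !crossZl. Qed.

Lemma tanC (t : line F) : tangent_line (join C A) (join C B) (join C D) t -> t = pol C.
Proof.
move=> ht; have hd := tangent_dot (nesym nAC) (nesym nBC) ht; rewrite eA eC eB in hd.
move: ht; rewrite /tangent_line /join eA eB eC eD => ht; rewrite /pol eC.
have hc0 : c != 0 by rewrite -eC val_nz.
have hdet : dot c (cross a b) = Dl by rewrite /Dl /xa /dot !cE; ring.
have hi : indep (cross c a) (cross c b).
  by apply: cross_indep; rewrite crossXXm hdet scaler_eq0 negb_or hD.
have k := crossd c; rewrite cross0 scaler0 addr0 in k.
have e3 : cross c d = (da / Dl) *: cross c a + (db / Dl) *: cross c b.
  apply: (scalerI hD); rewrite k; apply: vecP3; rewrite !cE; field; exact: hD.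
have ew : pv c = (Dl * da) *: cross c a + (- (Dl * db)) *: cross c b.
  by rewrite /pv !xvals (crossC b c); apply: vecP3; rewrite !cE; ring.
apply: (tangent_gen hi e3 _ ew _ ht hd).
  by rewrite -eC -eD; apply: neq_cross; exact: nCD.
split.
  nz.
field; exact: hD.
Qed.

Lemma tanB (t : line F) : tangent_line (join B C) (join B D) (join B A) t -> t = pol B.
Proof.
move=> ht; have hd := tangent_dot nBC nBD ht; rewrite eB eC eD in hd.
move: ht; rewrite /tangent_line /join eA eB eC eD => ht; rewrite /pol eB.
have hb0 : b != 0 by rewrite -eB val_nz.
have hdet : dot b (cross c d) = da by rewrite /da /xa /dot !cE; ring.
have hi : indep (cross b c) (cross b d).
  by apply: cross_indep; rewrite crossXXm hdet scaler_eq0 negb_or hda.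
have k := crossd b; rewrite cross0 scaler0 addr0 in k.
have e3 : cross b a = (- dc / da) *: cross b c + (Dl / da) *: cross b d.
  rewrite (_ : (Dl / da) *: cross b d = da^-1 *: (Dl *: cross b d)); last by rewrite scalerA mulrC.
  rewrite k; apply: vecP3; rewrite !cE; field; exact: hda.
have ew : pv b = (- (Dl * dc)) *: cross b c + (- (Dl ^+ 2)) *: cross b d.
  rewrite /pv !xvals (_ : (- (Dl ^+ 2)) *: cross b d = - Dl *: (Dl *: cross b d)); last first.
    by rewrite scalerA mulNr.
  rewrite k; apply: vecP3; rewrite !cE; ring.
apply: (tangent_gen hi e3 _ ew _ ht hd).
  by rewrite -eB -eA; apply: neq_cross; exact: (nesym nAB).
split.
  nz.
field; exact: hda.
Qed.

Lemma tanD (t : line F) : tangent_line (join D B) (join D A) (join D C) t -> t = pol D.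
Proof.
move=> ht; have hd := tangent_dot (nesym nBD) (nesym nAD) ht; rewrite eB eA eD in hd.
move: ht; rewrite /tangent_line /join eA eB eC eD => ht; rewrite /pol eD.
have hd0 : d != 0 by rewrite -eD val_nz.
have hdet : dot d (cross b a) = - dc by rewrite /dc /xc /dot !cE; ring.
have hi : indep (cross d b) (cross d a).
  by apply: cross_indep; rewrite crossXXm hdet scaler_eq0 negb_or oppr_eq0 hdc.
have k := crossd d; rewrite cross0 scaler0 in k.
have k' : dc *: cross d c = - (da *: cross d a + db *: cross d b).
  by apply/eqP; rewrite -addr_eq0 addrC -k eqxx.
have e3 : cross d c = (- db / dc) *: cross d b + (- da / dc) *: cross d a.
  apply: (scalerI hdc); rewrite k'; apply: vecP3; rewrite !cE; field; exact: hdc.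
have ew : pv d = (Dl * db) *: cross d b + (- (Dl * da)) *: cross d a.
  rewrite (_ : (Dl * db) *: cross d b = db *: (Dl *: cross d b)); last by rewrite scalerA mulrC.
  rewrite (_ : (- (Dl * da)) *: cross d a = - da *: (Dl *: cross d a)); last by rewrite scalerA mulNr mulrC.
  rewrite !crossdr !cross0 /pv !xvals; apply: vecP3; rewrite !cE; ring.
apply: (tangent_gen hi e3 _ ew _ ht hd).
  by rewrite -eD -eC; apply: neq_cross; exact: (nesym nCD).
split.
  nz.
field; exact: hdc.
Qed.

Lemma meet_pol (Z X : point F) : Z <> X -> meet (pol Z) (pol X) = mkpt (rv (cross (val Z) (val X))).
Proof.
move=> nZX; have hw := neq_cross nZX; have hr := rv_nz hw.
symmetry; apply: meet_uniq.
- by move=> e; apply: nZX; apply: pol_inj.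
- by apply/(incid_pol_mk _ hr); rewrite bfC -dot_pv pv_rv dotZr dotXl mulr0.
- by apply/(incid_pol_mk _ hr); rewrite bfC -dot_pv pv_rv dotZr dotXr mulr0.
Qed.

Lemma indep_rv u v : indep u v -> indep (rv u) (rv v).
Proof.
move=> hi s t e; apply: hi; apply: rv_inj; by rewrite rv_comb e rv0.
Qed.

Lemma indep_of_rv u v : indep (rv u) (rv v) -> indep u v.
Proof.
move=> hi s t e; apply: hi; by rewrite -rv_comb e rv0.
Qed.

Lemma curveA : harmonic_curve A C B D A. Proof. by left. Qed.
Lemma curveC : harmonic_curve A C B D C. Proof. by right; left. Qed.
Lemma curveB : harmonic_curve A C B D B. Proof. by right; right; left. Qed.
Lemma curveD : harmonic_curve A C B D D. Proof. by right; right; right; left. Qed.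

Lemma bundle_pol (Z : point F) : harmonic_curve A C B D Z ->
  harmonic_bundle (pol A) (pol C) (pol B) (pol D) (pol Z).
Proof.
move=> hZ; rewrite /harmonic_bundle.
case: (@eqP _ Z A) => [->|nA]; first by left.
case: (@eqP _ Z C) => [->|nC]; first by right; left.
case: (@eqP _ Z B) => [->|nB]; first by right; right; left.
case: (@eqP _ Z D) => [->|nD]; first by right; right; right; left.
right; right; right; right.
split; [move=> e; apply: nA; exact: pol_inj e | move=> e; apply: nC; exact: pol_inj e
  | move=> e; apply: nB; exact: pol_inj e | move=> e; apply: nD; exact: pol_inj e | ].
have hz := proj1 (curve_iff Z) hZ.
case: (hc_conic_bwd nA nB nC nD hz) => hzc H.
have h3 := neq_cross nC; have h4 := neq_cross nD.
rewrite !meet_pol //; rewrite eA eB eC eD in h3 h4 *.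
set z := val Z in hzc H h3 h4 *.
have hi : indep (cross z a) (cross z b).
  by apply: cross_indep; rewrite cross_zazb scaler_eq0 negb_or hzc val_nz.
have e3 : rv (cross z c) = lam1 z *: rv (cross z a) + mu1 z *: rv (cross z b).
  by rewrite (coeff3 hzc) rv_comb.
have e4 : rv (cross z d) = lam2 z *: rv (cross z a) + mu2 z *: rv (cross z b).
  by rewrite (coeff4 hzc) rv_comb.
exact: (proj2 (harm_vecE h2 (indep_rv hi) e3 e4 (rv_nz h3) (rv_nz h4)) H).
Qed.

Lemma on_pol_eq (X Z : point F) : harmonic_curve A C B D X -> harmonic_curve A C B D Z ->
  incid Z (pol X) -> Z = X.
Proof.
move=> hX hZ /incid_pol hzx.
by apply: conj_eq; [apply/curve_iff | apply/curve_iff | ].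
Qed.

Lemma bundle_uniq (Z : point F) (l : line F) : harmonic_curve A C B D Z ->
  harmonic_bundle (pol A) (pol C) (pol B) (pol D) l -> incid Z l -> l = pol Z.
Proof.
move=> hZ hl; case: hl => [->|[->|[->|[->|[nA nC nB nD hs]]]]] hzl.
- by rewrite (on_pol_eq curveA hZ hzl).
- by rewrite (on_pol_eq curveC hZ hzl).
- by rewrite (on_pol_eq curveB hZ hzl).
- by rewrite (on_pol_eq curveD hZ hzl).
set L0 := polinv l; have el : l = pol L0 by rewrite /L0 pol_polinv.
rewrite el in hs hzl nA nB nC nD.
have nA' : L0 <> A by move=> e; apply: nA; rewrite e.
have nB' : L0 <> B by move=> e; apply: nB; rewrite e.
have nC' : L0 <> C by move=> e; apply: nC; rewrite e.
have nD' : L0 <> D by move=> e; apply: nD; rewrite e.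
have h1 := neq_cross nA'; have h2' := neq_cross nB'.
have h3 := neq_cross nC'; have h4 := neq_cross nD'.
rewrite !meet_pol // in hs; rewrite eA eB eC eD in h1 h2' h3 h4 hs.
set y := val L0 in h1 h2' h3 h4 hs.
have hiR : indep (rv (cross y a)) (rv (cross y b)).
  apply: mkpt_neq_indep; [exact: rv_nz | exact: rv_nz | ].
  by case: hs => /uniq12.
have hi := indep_of_rv hiR.
have hyc : xc y != 0.
  apply/eqP => e; move: (indep_cross hi); rewrite cross_zazb e scale0r eqxx //.
have e3 : rv (cross y c) = lam1 y *: rv (cross y a) + mu1 y *: rv (cross y b).
  by rewrite (coeff3 hyc) rv_comb.
have e4 : rv (cross y d) = lam2 y *: rv (cross y a) + mu2 y *: rv (cross y b).
  by rewrite (coeff4 hyc) rv_comb.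
have H := proj1 (harm_vecE h2 hiR e3 e4 (rv_nz h3) (rv_nz h4)) hs.
have hyy := hc_conic_fwd hyc H.
have hL0 : harmonic_curve A C B D L0 by apply/curve_iff.
by rewrite el (on_pol_eq hL0 hZ hzl).
Qed.

Lemma main_sec :
  exists pol : point F -> line F,
    [/\ polarity pol,
        (forall P : point F, harmonic_curve A C B D P <-> incid P (pol P)),
        (forall P : point F, ~ harmonic_curve A C B D P ->
            refl_maps_onto P (pol P) (harmonic_curve A C B D))
      & forall a c b d : line F,
          tangent_line (join A C) (join A D) (join A B) a ->
          tangent_line (join C A) (join C B) (join C D) c ->
          tangent_line (join B C) (join B D) (join B A) b ->
          tangent_line (join D B) (join D A) (join D C) d ->
          forall Z : point F, harmonic_curve A C B D Z ->
            harmonic_bundle a c b d (pol Z) /\ incid Z (pol Z) /\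
            (forall l : line F, harmonic_bundle a c b d l -> incid Z l ->
               l = pol Z)].
Proof.
exists pol; split.
- exact: polarity_pol.
- move=> P; split => h.
    by apply/on_conic; apply/curve_iff.
  by apply/curve_iff; apply/on_conic.
- exact: refl_onto.
- move=> ta tc tb td hta htc htb htd Z hZ.
  rewrite (tanA hta) (tanC htc) (tanB htb) (tanD htd).
  split; first exact: bundle_pol.
  split; first by apply/on_conic; apply/curve_iff.
  by move=> l hl hzl; apply: bundle_uniq.
Qed.

End Conic.


Section Fin.
Variable F : fieldType.

Lemma ev_c0 i : c0 (ev F i) = (if inord 0 == i then 1 else 0). Proof. by rewrite /c0 /ev mxE. Qed.
Lemma ev_c1 i : c1 (ev F i) = (if inord 1 == i then 1 else 0). Proof. by rewrite /c1 /ev mxE. Qed.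
Lemma ev_c2 i : c2 (ev F i) = (if inord 2 == i then 1 else 0). Proof. by rewrite /c2 /ev mxE. Qed.

Lemma exists_line (X : point F) : exists l : line F, incid X l.
Proof.
have hx := val_nz X; set x := val X in hx.
have key : forall v, v != 0 -> (exists l : line F, incid X l) \/ True -> cross x v != 0 ->
    exists l : line F, incid X l.
  by move=> v _ _ hv; exists (mkpt (cross x v)); rewrite incid_mkpt // dotXl.
case: (vec_nz hx) => h.
- apply: (key (ev F (inord 1))); [ | by right | ].
    by apply/eqP => /vec0P [_ + _]; rewrite ev_c1 eqxx => /eqP; rewrite oner_eq0.
  apply/eqP => /vec0P [_ _]; rewrite c2X ev_c0 ev_c1 eqxx ineqs mulr0 mulr1 subr0.
  by apply/eqP.
- apply: (key (ev F (inord 0))); [ | by right | ].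
    by apply/eqP => /vec0P [+ _ _]; rewrite ev_c0 eqxx => /eqP; rewrite oner_eq0.
  apply/eqP => /vec0P [_ _]; rewrite c2X ev_c0 ev_c1 eqxx ineqs mulr0 mulr1 sub0r.
  by move/eqP; rewrite oppr_eq0; apply/negP.
- apply: (key (ev F (inord 0))); [ | by right | ].
    by apply/eqP => /vec0P [+ _ _]; rewrite ev_c0 eqxx => /eqP; rewrite oner_eq0.
  apply/eqP => /vec0P [_ + _]; rewrite c1X ev_c0 ev_c2 eqxx ineqs mulr0 mulr1 subr0.
  by apply/eqP.
Qed.

Lemma noncoll_det (X Y Z : point F) : ~ collinear3 X Y Z ->
  dot (val X) (cross (val Y) (val Z)) != 0.
Proof.
move=> nc; apply/eqP => hdet; apply: nc.
case: (@eqP _ Y Z) => [eYZ|nYZ].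
  case: (@eqP _ X Y) => [eXY|nXY].
    case: (exists_line X) => l hl; exists l; split => //; by rewrite -?eYZ -eXY.
  by exists (join X Y); split; [exact: join_incid1 | exact: join_incid2 | rewrite -eYZ; exact: join_incid2].
have hc := neq_cross nYZ.
exists (mkpt (cross (val Y) (val Z))); rewrite /collinear3; split.
- by rewrite incid_mkpt.
- by rewrite incid_mkpt // dotXl.
- by rewrite incid_mkpt // dotXr.
Qed.

End Fin.

Theorem mainTheorem6 (F : fieldType) (hchar : (2 : F) != 0)
    (A C B D : point F) (hQ : quadrangle A C B D) :
  exists pol : point F -> line F,
    [/\ polarity pol,
        (forall P : point F, harmonic_curve A C B D P <-> incid P (pol P)),
        (forall P : point F, ~ harmonic_curve A C B D P ->
            refl_maps_onto P (pol P) (harmonic_curve A C B D))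
      & forall a c b d : line F,
          tangent_line (join A C) (join A D) (join A B) a ->
          tangent_line (join C A) (join C B) (join C D) c ->
          tangent_line (join B C) (join B D) (join B A) b ->
          tangent_line (join D B) (join D A) (join D C) d ->
          forall Z : point F, harmonic_curve A C B D Z ->
            harmonic_bundle a c b d (pol Z) /\ incid Z (pol Z) /\
            (forall l : line F, harmonic_bundle a c b d l -> incid Z l ->
               l = pol Z)].
Proof.
case: hQ => n1 n2 n3 n4.
have d1 := noncoll_det n1; have d2 := noncoll_det n2.
have d3 := noncoll_det n3; have d4 := noncoll_det n4.
have hD : Dl (val A) (val B) (val C) != 0.
  by rewrite (_ : Dl _ _ _ = - dot (val A) (cross (val C) (val B))) ?oppr_eq0 //;
     rewrite /Dl /xa /dot !cE; ring.
have hda : da (val B) (val C) (val D) != 0.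
  by rewrite (_ : da _ _ _ = - dot (val C) (cross (val B) (val D))) ?oppr_eq0 //;
     rewrite /da /xa /dot !cE; ring.
have hdb : db (val A) (val C) (val D) != 0.
  by rewrite (_ : db _ _ _ = - dot (val A) (cross (val C) (val D))) ?oppr_eq0 //;
     rewrite /db /xb /dot !cE; ring.
have hdc : dc (val A) (val B) (val D) != 0.
  by rewrite (_ : dc _ _ _ = dot (val A) (cross (val B) (val D))) //;
     rewrite /dc /xc /dot !cE; ring.
exact: (main_sec hchar hD hda hdb hdc (erefl (val A)) (erefl (val B)) (erefl (val C)) (erefl (val D))).
Qed.
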